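(* Let $D=(V(D),A(D),w)$ be a weighted digraph and let $G=UG(D)$ be its weighted underlying graph. (a) Suppose $|V(D)|\ge 2$ and let $k$ be the minimum of $w(X,Y)$ over all partitions $(X,Y)$ of $V(D)$ into two nonempty parts. Then $r^+(D)+k\le \mathrm{mac}(D)$. (b) $\frac{\mathrm{mac}(G)}{2}\le \mathrm{mac}(D)\le \frac{\mathrm{mac}(G)+r^+(D)}{2}$. (c) $\frac{\mathrm{mac}(G)/2+r^+(D)}{2}\le \mathrm{mac}(D)\le \frac{\mathrm{mac}(G)+r^+(D)}{2}$. (d) Let $\chi$ be the chromatic number of $G$. If $\chi$ is even then $\left(\frac14+\frac{1}{4(\chi-1)}\right)w(D)\le \mathrm{mac}(D)$, and if $\chi$ is odd then $\left(\frac14+\frac{1}{4\chi}\right)w(D)\le\mathrm{mac}(D)$.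
   Context: A weighted digraph $D=(V(D),A(D),w)$ is a digraph without loops or parallel arcs (a pair of opposite arcs $xy,yx$ is allowed) together with a weight function $w:A(D)\to\mathbb{R}_{\ge 0}$; for a subgraph $H$, $w(H)$ is the sum of the weights of its arcs. For a partition $(X,Y)$ of $V(D)$, the directed cut (dicut) $(X,Y)$ consists of the arcs going from $X$ to $Y$, and $w(X,Y)$ is their total weight. $\mathrm{mac}(D)$ is the maximum of $w(X,Y)$ over all partitions $(X,Y)$ of $V(D)$. For a weighted undirected graph $G$, $\mathrm{mac}(G)$ is the maximum total weight of edges with one end in $X$ and the other in $Y$, over partitions $(X,Y)$ of $V(G)$. The underlying graph $UG(D)$ has vertex set $V(D)$, with $x,y$ adjacent iff there is an arc between them; the edge weight is $w(xy)$ if only $xy\in A(D)$ and $w(xy)+w(yx)$ if both $xy,yx\in A(D)$. For $v\in V(D)$, $w^+(v)$ ($w^-(v)$) is the total weight of arcs leaving (entering) $v$, $r(v)=w^+(v)-w^-(v)$, and $r^+(D)=\sum_{r(x)>0}r(x)=\frac12\sum_{x\in V(D)}|r(x)|$. *)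

(* Defs.v *)
From mathcomp Require Import all_boot all_order all_algebra.
Set Implicit Arguments. Unset Strict Implicit. Unset Printing Implicit Defensive.
Import Order.TTheory GRing.Theory Num.Theory.
Local Open Scope ring_scope.

(* A weighted digraph on a finite vertex type V is given by an arc relation
   A : rel V (irreflexive: no loops; A x y and A y x may both hold) and a
   weight function w : V -> V -> R, nonnegative on arcs.  Only the values
   w x y with A x y are ever used. *)

Section Digraph.
Variables (R : realFieldType) (V : finType) (A : rel V) (w : V -> V -> R).

Definition weighted_digraph : Prop :=
  (forall x, ~~ A x x) /\ (forall x y, A x y -> 0 <= w x y).

Definition dcut (X Y : {set V}) : R :=
  \sum_(x in X) \sum_(y in Y | A x y) w x y.

Definition mac_D : R := \big[Num.max/0]_(X : {set V}) dcut X (~: X).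

Definition wD : R := \sum_x \sum_(y | A x y) w x y.

Definition wout (v : V) : R := \sum_(y | A v y) w v y.
Definition win (v : V) : R := \sum_(y | A y v) w y v.
Definition rdeg (v : V) : R := wout v - win v.
Definition rplus : R := \sum_(v | 0 < rdeg v) rdeg v.

Definition ug_adj (x y : V) : bool := A x y || A y x.
Definition ug_w (x y : V) : R :=
  (if A x y then w x y else 0) + (if A y x then w y x else 0).

Definition ucut (X : {set V}) : R :=
  \sum_(x in X) \sum_(y in ~: X | ug_adj x y) ug_w x y.
Definition mac_G : R := \big[Num.max/0]_(X : {set V}) ucut X.

Definition proper_colouring (k : nat) (c : V -> 'I_k) : Prop :=
  forall x y, ug_adj x y -> c x != c y.
Definition colourable (k : nat) : Prop := exists c : V -> 'I_k, proper_colouring c.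
Definition chromatic_number (chi : nat) : Prop :=
  colourable chi /\ forall k, colourable k -> (chi <= k)%N.

End Digraph.

(* Main.v *)
Require Import Defs.
From mathcomp Require Import all_boot all_order all_algebra.
From mathcomp Require Import ring lra zify.
Import Order.TTheory GRing.Theory Num.Theory.
Local Open Scope ring_scope.
Set Implicit Arguments. Unset Strict Implicit.


Lemma cnt (k m : nat) (i j : 'I_k) : i != j -> (0 < m)%N ->
  #|[set S : {set 'I_k} | [&& #|S| == m, i \in S & j \notin S]]| = 'C(k - 2, m.-1).
Proof.
move=> ij m0.
have hB : #|~: [set i; j]| = (k - 2)%N.
  by have := cardsC [set i; j]; rewrite cards2 ij card_ord; lia.
rewrite -hB -cards_draws.
set D := [set T : {set 'I_k} | (T \subset ~: [set i; j]) & (#|T| == m.-1)].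
have ni (T : {set 'I_k}) : T \subset ~: [set i;j] -> i \notin T.
  by move=> s; apply/negP => /(subsetP s); rewrite !inE eqxx.
have nj (T : {set 'I_k}) : T \subset ~: [set i;j] -> j \notin T.
  by move=> s; apply/negP => /(subsetP s); rewrite !inE eqxx orbT.
have inj : {in D &, injective (fun T => i |: T)}.
  move=> T1 T2; rewrite !inE => /andP[s1 _] /andP[s2 _] e.
  by rewrite -(setU1K (ni _ s1)) -(setU1K (ni _ s2)) e.
rewrite -(card_in_imset inj); apply: eq_card => S.
rewrite inE; apply/idP/imsetP.
  move=> /and3P [/eqP cS iS jS]; exists (S :\ i); last by rewrite setD1K.
  rewrite inE; apply/andP; split.
    apply/subsetP => x; rewrite !inE => /andP [xi xS]; rewrite negb_or xi /=.
    by apply/eqP => xj; move: jS; rewrite -xj xS.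
  by apply/eqP; have := cardsD1 i S; rewrite iS cS add1n => ->.
case=> T; rewrite inE => /andP [sT /eqP cT] ->.
rewrite cardsU1 (ni _ sT) cT setU11 /= !inE negb_or (eq_sym j) ij (nj _ sT) andbT.
apply/eqP; lia.
Qed.

Lemma bin_id (k m : nat) : (0 < m)%N -> (m < k)%N ->
  ('C(k - 2, m.-1) * (k * (k - 1)) = 'C(k, m) * (m * (k - m)))%N.
Proof.
case: m => [//|p] _; case: k => [//|[//|n]] hlt.
have e1 := mul_bin_diag n.+2 p.
have e2 := mul_bin_down n.+1 p.
rewrite /= in e1 e2.
have -> : (n.+2 - 2 = n)%N by lia.
have -> : (n.+2 - p.+1 = n.+1 - p)%N by lia.
rewrite /=.
have -> : (n.+2 - 1 = n.+1)%N by lia.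
rewrite mulnC -mulnA e2 (mulnC (n.+1 - p)%N) mulnA e1; lia.
Qed.

Section Aux.
Variables (R : realFieldType) (V : finType) (A : rel V) (w : V -> V -> R).
Hypothesis hD : weighted_digraph A w.

Definition aw x y : R := if A x y then w x y else 0.

Lemma aw_ge0 x y : 0 <= aw x y.
Proof. rewrite /aw; case: ifP => // h; exact: hD.2. Qed.

Lemma dcutE (X Y : {set V}) : dcut A w X Y = \sum_(x in X) \sum_(y in Y) aw x y.
Proof. by apply: eq_bigr => x _; rewrite big_mkcondr. Qed.

Lemma dcut_ge0 (X Y : {set V}) : 0 <= dcut A w X Y.
Proof. rewrite dcutE; apply: sumr_ge0 => x _; apply: sumr_ge0 => y _; exact: aw_ge0. Qed.

Lemma dcut0l (Y : {set V}) : dcut A w set0 Y = 0.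
Proof. by rewrite /dcut big_set0. Qed.

Lemma dcut0r (X : {set V}) : dcut A w X set0 = 0.
Proof. by rewrite dcutE big1 // => x _; rewrite big_set0. Qed.

Lemma split_sum (F : V -> R) (X : {set V}) : \sum_x F x = \sum_(x in X) F x + \sum_(x in ~: X) F x.
Proof.
rewrite (bigID (mem X)) /=; congr (_ + _); apply: eq_bigl => x; by rewrite ?inE.
Qed.

Lemma sum_rdeg (X : {set V}) : \sum_(x in X) rdeg A w x = dcut A w X (~: X) - dcut A w (~: X) X.
Proof.
rewrite /rdeg sumrB.
have -> : \sum_(x in X) wout A w x = dcut A w X X + dcut A w X (~: X).
  rewrite !dcutE -big_split /=; apply: eq_bigr => x _.
  by rewrite /wout big_mkcond -(split_sum (aw x)).
have -> : \sum_(x in X) win A w x = dcut A w X X + dcut A w (~: X) X.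
  have -> : \sum_(x in X) win A w x =
     \sum_(x in X) \sum_(y in X) aw y x + \sum_(x in X) \sum_(y in ~: X) aw y x.
    rewrite -big_split /=; apply: eq_bigr => x _.
    by rewrite /win big_mkcond -(split_sum (aw^~ x)).
  by rewrite !dcutE (exchange_big _ _ _ (mem X) (mem X)) (exchange_big _ _ _ (mem X) (mem (~: X))).
lra.
Qed.

Lemma ucutE (X : {set V}) : ucut A w X = dcut A w X (~: X) + dcut A w (~: X) X.
Proof.
rewrite !dcutE [in X in _ = _ + X]exchange_big -big_split /=.
apply: eq_bigr => x _; rewrite big_mkcondr -big_split /=.
apply: eq_bigr => y _; rewrite /ug_adj /ug_w /aw.
by case: (A x y); case: (A y x); rewrite ?addr0.
Qed.

Lemma bigmax_ge (T : finType) (F : T -> R) (X : T) : F X <= \big[Num.max/0]_(Y : T) F Y.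
Proof. by rewrite (bigD1 X) //= le_max lexx. Qed.

Lemma bigmax_le (T : finType) (F : T -> R) B : 0 <= B -> (forall X, F X <= B) ->
  \big[Num.max/0]_(Y : T) F Y <= B.
Proof.
move=> h0 h; apply: (big_ind (fun m => m <= B)) => //.
by move=> x y hx hy; rewrite ge_max hx hy.
Qed.

Lemma bigmax_ge0 (T : finType) (F : T -> R) : 0 <= \big[Num.max/0]_(Y : T) F Y.
Proof.
apply: (big_rec (fun m => 0 <= m)) => //.
by move=> i x _ hx; rewrite le_max hx orbT.
Qed.


Arguments bigmax_ge {T} F X.
Arguments bigmax_ge0 {T} F.

Lemma mac_ge (X : {set V}) : dcut A w X (~: X) <= mac_D A w.
Proof. exact: (bigmax_ge (fun X => dcut A w X (~: X))). Qed.

Lemma macG_ge (X : {set V}) : ucut A w X <= mac_G A w.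
Proof. exact: (bigmax_ge (fun X => ucut A w X)). Qed.

Lemma sum_rdeg_le (X : {set V}) : \sum_(x in X) rdeg A w x <= rplus A w.
Proof.
rewrite /rplus big_mkcond [X in _ <= X]big_mkcond /=; apply: ler_sum => x _.
case: (x \in X); case: ifP => // h; rewrite ?lexx //.
by rewrite leNgt h.
exact: ltW.
Qed.

Definition Ppos : {set V} := [set x | 0 < rdeg A w x].

Lemma rplusE : rplus A w = \sum_(x in Ppos) rdeg A w x.
Proof. by apply: eq_bigl => x; rewrite inE. Qed.

Lemma rplus_ge0 : 0 <= rplus A w.
Proof. by apply: sumr_ge0 => x /ltW. Qed.

Lemma rplus_le_mac : rplus A w <= mac_D A w.
Proof.
rewrite rplusE sum_rdeg; have := dcut_ge0 (~: Ppos) Ppos; have := mac_ge Ppos; lra.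
Qed.

Lemma wDE : wD A w = \sum_x \sum_y aw x y.
Proof. by apply: eq_bigr => x _; rewrite big_mkcond. Qed.

Lemma colour_bound (k m : nat) (c : V -> 'I_k) : proper_colouring A c -> (0 < m)%N -> (m < k)%N ->
  ((m * (k - m))%N%:R / (k * (k - 1))%N%:R) * wD A w <= mac_D A w.
Proof.
move=> pc m0 mk.
set F := [set S : {set 'I_k} | #|S| == m].
have cutE (S : {set 'I_k}) : dcut A w (c @^-1: S) (~: (c @^-1: S)) =
   \sum_x \sum_y (if (c x \in S) && (c y \notin S) then aw x y else 0).
  rewrite dcutE big_mkcond; apply: eq_bigr => x _; rewrite !inE.
  case: (c x \in S) => /=; last by rewrite big1.
  by rewrite big_mkcond; apply: eq_bigr => y _; rewrite !inE.
have h1 : \sum_(S in F) dcut A w (c @^-1: S) (~: (c @^-1: S)) <= mac_D A w *+ #|F|.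
  by rewrite -sumr_const; apply: ler_sum => S _; exact: mac_ge.
have h2 : \sum_(S in F) dcut A w (c @^-1: S) (~: (c @^-1: S)) = ('C(k - 2, m.-1))%:R * wD A w.
  under eq_bigr => S _ do rewrite cutE.
  rewrite exchange_big wDE mulr_sumr; apply: eq_bigr => x _.
  rewrite exchange_big mulr_sumr; apply: eq_bigr => y _.
  rewrite -big_mkcondr.
  rewrite (eq_bigl (mem [set S in F | (c x \in S) && (c y \notin S)])); last by move=> S; rewrite !inE.
  rewrite sumr_const mulr_natl.
  rewrite /aw; case: ifP => hA; last by rewrite !mul0rn.
  have cxy : c x != c y by apply: pc; rewrite /ug_adj hA.
  by rewrite -(cnt cxy m0); congr (_ *+ _); apply: eq_card => S; rewrite !inE andbA.
have hF : #|F| = 'C(k, m) by rewrite card_draws card_ord.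
have hbin := bin_id m0 mk.
have Cpos : (0 < 'C(k, m))%N by rewrite bin_gt0 ltnW.
have e : (m * (k - m))%N%:R / (k * (k - 1))%N%:R = ('C(k - 2, m.-1))%:R / ('C(k, m))%:R :> R.
  apply/eqP; rewrite eqr_div ?pnatr_eq0 -?lt0n // -?natrM ?eqr_nat; last by rewrite muln_gt0; apply/andP; split; lia.
  by rewrite hbin mulnC.
rewrite e mulrAC ler_pdivrMr ?ltr0n // mulr_natr -hF -h2; exact: h1.
Qed.

End Aux.

Theorem mainTheorem1 (R : realFieldType) (V : finType) (A : rel V) (w : V -> V -> R) :
  weighted_digraph A w ->
  (* (a) *)
  ((1 < #|V|)%N -> forall k : R,
     (exists X : {set V}, [/\ X != set0, ~: X != set0 & dcut A w X (~: X) = k]) ->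
     (forall X : {set V}, X != set0 -> ~: X != set0 -> k <= dcut A w X (~: X)) ->
     rplus A w + k <= mac_D A w) /\
  (* (b) *)
  (mac_G A w / 2 <= mac_D A w /\ mac_D A w <= (mac_G A w + rplus A w) / 2) /\
  (* (c) *)
  ((mac_G A w / 2 + rplus A w) / 2 <= mac_D A w /\
     mac_D A w <= (mac_G A w + rplus A w) / 2) /\
  (* (d) *)
  (forall chi : nat, chromatic_number A chi ->
     (~~ odd chi -> (1 / 4 + 1 / (4 * (chi%:R - 1))) * wD A w <= mac_D A w) /\
     (odd chi -> (1 / 4 + 1 / (4 * chi%:R)) * wD A w <= mac_D A w)).
Proof.
move=> hD.
have lowb : mac_G A w / 2 <= mac_D A w.
  suff : mac_G A w <= 2 * mac_D A w by lra.
  apply: bigmax_le => [|X]; first by have := bigmax_ge0 (fun X => dcut A w X (~: X)); rewrite /mac_D; lra.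
  rewrite (ucutE A w); have := mac_ge A w X; have := mac_ge A w (~: X); rewrite setCK; lra.
have upb : mac_D A w <= (mac_G A w + rplus A w) / 2.
  apply: bigmax_le => [|X].
    have := bigmax_ge0 (fun X => ucut A w X); have := rplus_ge0 A w; rewrite /mac_G; lra.
  have := sum_rdeg_le A w X; rewrite (sum_rdeg A w); have := macG_ge A w X; rewrite (ucutE A w); lra.
split.
  move=> _ k [X0 [_ _ hX0]] hk.
  have [/eqP P0 | P0] := boolP (Ppos A w == set0).
    rewrite (rplusE A w) P0 big_set0 -hX0 add0r; exact: mac_ge.
  have [/eqP P1 | P1] := boolP (~: Ppos A w == set0).
    rewrite (rplusE A w) (sum_rdeg A w) P1 (dcut0l A w) (dcut0r A w) subr0 add0r -hX0; exact: mac_ge.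
  have := hk _ P1; rewrite setCK => /(_ P0) h; have := mac_ge A w (Ppos A w).
  rewrite (rplusE A w) (sum_rdeg A w); lra.
split; first by [].
split; first by have := rplus_le_mac hD; lra.
move=> chi [[c pc] _].
have [chi1 | chi2] := leqP chi 1.
  have -> : wD A w = 0.
    rewrite (wDE A w) big1 // => x _; rewrite big1 // => y _; rewrite /aw; case: ifP => hA //.
    have := pc x y; rewrite /ug_adj hA => /(_ isT).
    have -> : c x = c y by apply: ord_inj; have := ltn_ord (c x); have := ltn_ord (c y); lia.
    by rewrite eqxx.
  by rewrite !mulr0; split => _; apply: (bigmax_ge0 (fun X => dcut A w X (~: X))).
have hh := odd_double_half chi.
set m := chi./2 in hh.
split => ho.
  rewrite (negbTE ho) add0n -addnn in hh.
  have m1 : (0 < m)%N by lia.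
  have m2 : (m < chi)%N by lia.
  have := colour_bound w pc m1 m2.
  suff -> : (1 / 4 + 1 / (4 * (chi%:R - 1))) = ((m * (chi - m))%N%:R / (chi * (chi - 1))%N%:R) :> R by [].
  rewrite -hh addnK natrM natrM natrB; last by lia.
  rewrite natrD.
  have : (1 : R) <= m%:R by rewrite ler1n.
  move: (m%:R) => x hx.
  field; lra.
rewrite ho /= in hh.
have hc : chi = (m + m + 1)%N by lia.
have m1 : (0 < m)%N by lia.
have m2 : (m < chi)%N by lia.
have := colour_bound w pc m1 m2.
suff -> : (1 / 4 + 1 / (4 * chi%:R)) = ((m * (chi - m))%N%:R / (chi * (chi - 1))%N%:R) :> R by [].
rewrite hc.
have -> : (m + m + 1 - m = m + 1)%N by lia.
have -> : (m + m + 1 - 1 = m + m)%N by lia.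
rewrite !natrM !natrD.
have : (1 : R) <= m%:R by rewrite ler1n.
move: (m%:R) => x hx.
field; apply/andP; split; rewrite gt_eqF //; lra.
Qed.
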